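(* For every $f>0$, the minimum possible root-mean-square size of a planar configuration with cohesion $f$ is $$\min\{b(\mathbf r):\ \mathbf r\in\mathfrak R,\ f(\mathbf r)=f\}=\frac{C(\mathbf m)}{f\sqrt{\sum_j m_j}},$$ and this minimum is achieved on every trajectory $\mathbf r_\lambda(t)$ ($\lambda>0$, generated by any minimizer of $f+\lambda g$), i.e. $b(\mathbf r_\lambda(t))=\frac{C(\mathbf m)}{f(\mathbf r_\lambda(t))\sqrt{\sum_j m_j}}$ for all $t\ge0$.
   Context: Fix $N\ge 2$, masses $\mathbf m=(m_1,\dots,m_N)$, $m_i>0$, and $\gamma>0$. Planar configuration space $\mathfrak R=\{\mathbf r=(\mathbf r_1,\dots,\mathbf r_N)\in(\mathbb R^2)^N:\ \mathbf r_i\neq\mathbf r_j \text{ for } i\neq j\}$; cohesion $f(\mathbf r)=\sum_{i<j}\frac{\gamma m_im_j}{|\mathbf r_j-\mathbf r_i|}$; $g(\mathbf r)=\sum_i m_i|\mathbf r_i|^2$; root-mean-square size $b(\mathbf r)=\sqrt{\sum_i\beta_i|\mathbf r_i|^2}$ with $\beta_i=m_i/\sum_j m_j$ (so $g=b^2\sum_jm_j$). Let $C(\mathbf m)=\min\{f(\mathbf r):\mathbf r\in\mathfrak R,\ g(\mathbf r)=1\}$. For $\lambda>0$ and a minimizer $\mathbf r_\lambda=(\mathbf r_{1\lambda},\dots,\mathbf r_{N\lambda})$ of $f+\lambda g$ on $\mathfrak R$, with $\mathbf r_{i\lambda}=|\mathbf r_{i\lambda}|(\cos\varphi_{i\lambda},\sin\varphi_{i\lambda})$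 and $\omega=\sqrt{2\lambda}$, the trajectory $\mathbf r_\lambda(t)$ has components $\mathbf r_{i\lambda}(t)=|\mathbf r_{i\lambda}|(\cos(\varphi_{i\lambda}+\omega t),\sin(\varphi_{i\lambda}+\omega t))$, $t\ge0$. *)

(* Defs.v *)
From HB Require Import structures.
From mathcomp Require Import all_boot all_order all_algebra.
From mathcomp Require Import all_classical all_reals all_analysis.
Set Implicit Arguments. Unset Strict Implicit. Unset Printing Implicit Defensive.
Import Order.TTheory GRing.Theory Num.Theory.
Local Open Scope ring_scope.

Section Defs.
Variable R : realType.
Variable N : nat.

Definition normp (p : R * R) : R := Num.sqrt (p.1 ^+ 2 + p.2 ^+ 2).
Definition distp (p q : R * R) : R := normp (q.1 - p.1, q.2 - p.2).

Definition in_config (r : 'I_N -> R * R) : Prop :=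
  forall i j : 'I_N, i != j -> r i <> r j.

Definition cohesion (gamma : R) (m : 'I_N -> R) (r : 'I_N -> R * R) : R :=
  \sum_(i < N) \sum_(j < N | (i < j)%N) gamma * m i * m j / distp (r i) (r j).

Definition gmom (m : 'I_N -> R) (r : 'I_N -> R * R) : R :=
  \sum_(i < N) m i * normp (r i) ^+ 2.

Definition total_mass (m : 'I_N -> R) : R := \sum_(i < N) m i.

Definition rms_size (m : 'I_N -> R) (r : 'I_N -> R * R) : R :=
  Num.sqrt (\sum_(i < N) (m i / total_mass m) * normp (r i) ^+ 2).

Definition is_min (S : R -> Prop) (x : R) : Prop :=
  S x /\ forall y, S y -> x <= y.

Definition is_minimizer (gamma : R) (m : 'I_N -> R) (lam : R)
    (rl : 'I_N -> R * R) : Prop :=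
  in_config rl /\
  forall s, in_config s ->
    cohesion gamma m rl + lam * gmom m rl <= cohesion gamma m s + lam * gmom m s.

Definition polar_angles (r : 'I_N -> R * R) (phi : 'I_N -> R) : Prop :=
  forall i, r i = (normp (r i) * cos (phi i), normp (r i) * sin (phi i)).

Definition traj (r : 'I_N -> R * R) (phi : 'I_N -> R) (omega t : R)
    : 'I_N -> R * R :=
  fun i => (normp (r i) * cos (phi i + omega * t),
            normp (r i) * sin (phi i + omega * t)).
End Defs.

(* Main.v *)
Require Import Defs.
From HB Require Import structures.
From mathcomp Require Import all_boot all_order all_algebra.
From mathcomp Require Import all_classical all_reals all_analysis.
From mathcomp Require Import ring lra.
Import Order.TTheory GRing.Theory Num.Theory.
Import numFieldNormedType.Exports.
Set Implicit Arguments. Unset Strict Implicit.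
Local Open Scope ring_scope.

Section Alg.
Local Open Scope classical_set_scope.
Import ArrowAsProduct.
Variable R : realType.
Variable N : nat.
Variable m : 'I_N -> R.
Variable gamma : R.
Hypothesis hm : forall i, 0 < m i.
Hypothesis hga : 0 < gamma.

Lemma normp_ge0 (p : R * R) : 0 <= normp p.
Proof. exact: sqrtr_ge0. Qed.
Lemma normp_sq (p : R * R) : normp p ^+ 2 = p.1 ^+ 2 + p.2 ^+ 2.
Proof. by rewrite /normp sqr_sqrtr // addr_ge0 // sqr_ge0. Qed.
Lemma normp_eq0 (p : R * R) : normp p = 0 -> p = (0, 0).
Proof.
move=> h; have : p.1 ^+ 2 + p.2 ^+ 2 = 0 by rewrite -normp_sq h expr0n.
move/eqP; rewrite paddr_eq0 ?sqr_ge0 // !sqrf_eq0 => /andP[/eqP h1 /eqP h2].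
by move: h1 h2; case: p h => a b _ /= -> ->.
Qed.
Lemma distp_ge0 (p q : R * R) : 0 <= distp p q.
Proof. exact: normp_ge0. Qed.
Lemma distp_gt0 (p q : R * R) : p <> q -> 0 < distp p q.
Proof.
move=> pq; rewrite lt_neqAle distp_ge0 andbT eq_sym; apply/eqP => /normp_eq0 [].
move/eqP; rewrite subr_eq0 => /eqP h1 /eqP; rewrite subr_eq0 => /eqP h2.
by apply: pq; case: p q h1 h2 => a b [c d] /= -> ->.
Qed.
Lemma distpp (p : R * R) : distp p p = 0.
Proof. by rewrite /distp /normp !subrr expr0n addr0 sqrtr0. Qed.

Definition term (r : 'I_N -> R * R) (i j : 'I_N) := gamma * m i * m j / distp (r i) (r j).
Lemma term_ge0 r i j : 0 <= term r i j.
Proof.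
by rewrite /term divr_ge0 ?distp_ge0 // !mulr_ge0 // ltW.
Qed.
Lemma term_le r (i j : 'I_N) : (i < j)%N -> term r i j <= cohesion gamma m r.
Proof.
move=> ij; rewrite /cohesion (bigD1 i) //= (bigD1 j) //=.
rewrite -addrA lerDl addr_ge0 // ?sumr_ge0 // => k _; first exact: term_ge0.
by apply: sumr_ge0 => l _; exact: term_ge0.
Qed.
Lemma cohesion_ge0 r : 0 <= cohesion gamma m r.
Proof. by apply: sumr_ge0 => i _; apply: sumr_ge0 => j _; exact: term_ge0. Qed.

Lemma gmom_term r i : m i * normp (r i) ^+ 2 <= gmom m r.
Proof.
rewrite /gmom (bigD1 i) //= lerDl sumr_ge0 // => k _.
by rewrite mulr_ge0 ?sqr_ge0 // ltW.
Qed.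
Lemma gmom_ge0 r : 0 <= gmom m r.
Proof. by apply: sumr_ge0 => k _; rewrite mulr_ge0 ?sqr_ge0 // ltW. Qed.

Lemma box_bound r i : gmom m r = 1 ->
  `|(r i).1| <= (m i)^-1 + 1 /\ `|(r i).2| <= (m i)^-1 + 1.
Proof.
move=> g1; have := gmom_term r i; rewrite g1 normp_sq => h.
have hmi := hm i.
have h1 : (r i).1 ^+ 2 <= (m i)^-1.
  rewrite -(ler_pM2l hmi) mulfV ?gt_eqF //; apply: le_trans h.
  by rewrite ler_pM2l // lerDl sqr_ge0.
have h2 : (r i).2 ^+ 2 <= (m i)^-1.
  rewrite -(ler_pM2l hmi) mulfV ?gt_eqF //; apply: le_trans h.
  by rewrite ler_pM2l // lerDr sqr_ge0.
have aux (x : R) : x ^+ 2 <= (m i)^-1 -> `|x| <= (m i)^-1 + 1.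
  move=> hx; have [le1|lt1] := leP `|x| 1.
    by rewrite (le_trans le1) // lerDr invr_ge0 ltW.
  apply: (le_trans _ (ler_wpDr ler01 hx)).
  apply: (@le_trans _ _ (x ^+ 2)); last by []. rewrite -real_normK ?num_real //.
  by rewrite expr2 ler_peMl // ltW.
by split; apply: aux.
Qed.

Definition scale (k : R) (r : 'I_N -> R * R) : 'I_N -> R * R :=
  fun i => (k * (r i).1, k * (r i).2).
Lemma normp_scale (k a b : R) : 0 <= k -> normp (k * a, k * b) = k * normp (a, b).
Proof.
move=> k0; rewrite /normp /= !exprMn -mulrDr sqrtrM ?sqr_ge0 //.
by rewrite sqrtr_sqr ger0_norm.
Qed.
Lemma distp_scale k r i j : 0 <= k ->
  distp (scale k r i) (scale k r j) = k * distp (r i) (r j).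
Proof. by move=> k0; rewrite /distp /scale /= -!mulrBr normp_scale. Qed.
Lemma cohesion_scale k r : 0 < k -> cohesion gamma m (scale k r) = cohesion gamma m r / k.
Proof.
move=> k0; rewrite /cohesion mulr_suml; apply: eq_bigr => i _.
rewrite mulr_suml; apply: eq_bigr => j _.
by rewrite distp_scale ?ltW // invfM; ring.
Qed.
Lemma gmom_scale k r : 0 <= k -> gmom m (scale k r) = k ^+ 2 * gmom m r.
Proof.
move=> k0; rewrite /gmom mulr_sumr; apply: eq_bigr => i _.
rewrite /scale normp_scale //; rewrite -surjective_pairing; ring.
Qed.
Lemma in_config_scale k r : k != 0 -> in_config r -> in_config (scale k r).
Proof.
move=> k0 hr i j ij [e1 e2]; apply: (hr i j ij).
rewrite [r i]surjective_pairing [r j]surjective_pairing.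
by rewrite (mulfI k0 e1) (mulfI k0 e2).
Qed.
Lemma rms_formula r : 0 < total_mass m ->
  rms_size m r = Num.sqrt (gmom m r) / Num.sqrt (total_mass m).
Proof.
move=> M0; rewrite /rms_size -sqrtrV ?ltW // -sqrtrM ?gmom_ge0 //.
congr Num.sqrt; rewrite /gmom mulr_suml; apply: eq_bigr => i _; ring.
Qed.

Hypothesis hN : (2 <= N)%N.
Let i0 : 'I_N := Ordinal (ltn_trans (ltnSn 0) hN).
Let i1 : 'I_N := Ordinal hN.
Lemma i01 : (i0 < i1)%N. Proof. by []. Qed.
Lemma i0n1 : i0 != i1. Proof. by []. Qed.

Lemma total_mass_gt0 : 0 < total_mass m.
Proof.
rewrite /total_mass (bigD1 i0) //= ltr_pwDl ?hm // sumr_ge0 // => i _.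
exact: ltW.
Qed.
Lemma gmom_gt0 r : in_config r -> 0 < gmom m r.
Proof.
move=> hr.
have [i hi] : exists i, r i <> (0, 0).
  case: (pselect (r i0 = (0,0))) => h0; last by exists i0.
  exists i1 => h1; apply: (hr i0 i1 i0n1); by rewrite h0 h1.
apply: (lt_le_trans _ (gmom_term r i)); rewrite mulr_gt0 ?hm //.
rewrite exprn_gt0 // lt_neqAle normp_ge0 andbT eq_sym; apply/eqP => /normp_eq0.
exact: hi.
Qed.
Lemma cohesion_gt0 r : in_config r -> 0 < cohesion gamma m r.
Proof.
move=> hr; apply: (lt_le_trans _ (@term_le r i0 i1 i01)).
rewrite /term divr_gt0 ?mulr_gt0 ?hm // distp_gt0 //.
exact: (hr i0 i1 i0n1).
Qed.

Lemma normp_polar (a x : R) : 0 <= a -> normp (a * cos x, a * sin x) = a.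
Proof.
move=> a0; rewrite normp_scale // /normp /= cos2Dsin2 sqrtr1 mulr1 //.
Qed.
Lemma normp_rot (a b x y t : R) :
  normp (b * cos (y + t) - a * cos (x + t), b * sin (y + t) - a * sin (x + t)) =
  normp (b * cos y - a * cos x, b * sin y - a * sin x).
Proof.
set U := b * cos y - a * cos x; set V := b * sin y - a * sin x.
have e1 : b * cos (y + t) - a * cos (x + t) = cos t * U - sin t * V.
  by rewrite /U /V !cosD; ring.
have e2 : b * sin (y + t) - a * sin (x + t) = sin t * U + cos t * V.
  by rewrite /U /V !sinD; ring.
rewrite e1 e2 /normp /=; congr Num.sqrt.
transitivity ((cos t ^+ 2 + sin t ^+ 2) * (U ^+ 2 + V ^+ 2)); first ring.
by rewrite cos2Dsin2 mul1r.
Qed.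

Lemma traj_inv rl phi w t : polar_angles rl phi ->
  gmom m (traj rl phi w t) = gmom m rl /\ cohesion gamma m (traj rl phi w t) = cohesion gamma m rl.
Proof.
move=> hp; split.
  rewrite /gmom; apply: eq_bigr => i _; rewrite /traj normp_polar //.
  exact: normp_ge0.
rewrite /cohesion; apply: eq_bigr => i _; apply: eq_bigr => j _.
congr (_ / _); rewrite /distp /traj /=.
have hi := hp i; have hj := hp j; move: hi hj.
set a := normp (rl i); set b := normp (rl j); move=> hi hj.
by rewrite normp_rot hi hj.
Qed.


Definition X := ('I_N -> (R * R)%type).

Lemma c1 (i : 'I_N) (x : X) : {for x, continuous (fun r : X => (r i).1)}.
Proof.
apply: (@continuous_comp _ _ _ (fun r : X => r i) fst).
  exact: (@proj_continuous 'I_N (fun _ => (R*R)%type) i).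
exact: cvg_fst.
Qed.
Lemma c2 (i : 'I_N) (x : X) : {for x, continuous (fun r : X => (r i).2)}.
Proof.
apply: (@continuous_comp _ _ _ (fun r : X => r i) snd).
  exact: (@proj_continuous 'I_N (fun _ => (R*R)%type) i).
exact: cvg_snd.
Qed.

Lemma cD (f g : X -> R) x : {for x, continuous f} -> {for x, continuous g} ->
  {for x, continuous (fun r => f r + g r)}.
Proof. exact: continuousD. Qed.
Lemma cB (f g : X -> R) x : {for x, continuous f} -> {for x, continuous g} ->
  {for x, continuous (fun r => f r - g r)}.
Proof. exact: continuousB. Qed.
Lemma cM (f g : X -> R) x : {for x, continuous f} -> {for x, continuous g} ->
  {for x, continuous (fun r => f r * g r)}.
Proof. exact: continuousM. Qed.
Lemma cC (c : R) x : {for x, continuous (fun _ : X => c)}.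
Proof. exact: cst_continuous. Qed.
Lemma cSq (f : X -> R) x : {for x, continuous f} -> {for x, continuous (fun r => Num.sqrt (f r))}.
Proof. move=> h; apply: (@continuous_comp _ _ _ f Num.sqrt) => //; exact: sqrt_continuous. Qed.
Lemma cV (f : X -> R) x : f x != 0 -> {for x, continuous f} -> {for x, continuous (fun r => (f r)^-1)}.
Proof. exact: continuousV. Qed.
Lemma cSum (I : Type) (s : seq I) (P : pred I) (F : I -> X -> R) x :
  (forall i, P i -> {for x, continuous (F i)}) ->
  {for x, continuous (fun r => \sum_(i <- s | P i) F i r)}.
Proof.
move=> h; elim: s => [|a s IH].
  rewrite (_ : (fun r => _) = fun _ => 0); first exact: cC.
  by apply: funext => r; rewrite big_nil.
rewrite (_ : (fun r => _) = fun r => if P a then F a r + \sum_(i <- s | P i) F i r else \sum_(i <- s | P i) F i r).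
  case Pa: (P a); last exact: IH.
  by apply: cD => //; apply: h.
by apply: funext => r; rewrite big_cons.
Qed.

Lemma cX (f : X -> R) x : {for x, continuous f} -> {for x, continuous (fun r => f r ^+ 2)}.
Proof.
move=> h; rewrite (_ : (fun r => _) = fun r => f r * f r); first exact: cM.
by apply: funext => r; rewrite expr2.
Qed.
Lemma cnorm (i : 'I_N) x : {for x, continuous (fun r : X => normp (r i))}.
Proof. by rewrite /normp; apply: cSq; apply: cD; apply: cX; [exact: c1|exact: c2]. Qed.
Lemma cdist (i j : 'I_N) x : {for x, continuous (fun r : X => distp (r i) (r j))}.
Proof.
rewrite /distp /normp /=; apply: cSq; apply: cD; apply: cX; apply: cB;
  by [exact: c1|exact: c2].
Qed.
Lemma cgmom x : {for x, continuous (gmom m : X -> R)}.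
Proof.
rewrite /gmom; apply: cSum => i _; apply: cM; first exact: cC.
by apply: cX; apply: cnorm.
Qed.
Lemma ccoh x : (forall i j : 'I_N, (i < j)%N -> 0 < distp (x i) (x j)) ->
  {for x, continuous (cohesion gamma m : X -> R)}.
Proof.
move=> hx; rewrite /cohesion; apply: cSum => i _; apply: cSum => j ij.
apply: cM; first exact: cC.
by apply: cV; [rewrite gt_eqF // hx | exact: cdist].
Qed.

Lemma exists_config1 : exists r, in_config r /\ gmom m r = 1.
Proof.
pose q : X := fun i => ((i : nat)%:R, 0).
have hq : in_config q.
  move=> i j /eqP ij [e]; apply: ij; apply: val_inj => /=.
  by move/eqP: e; rewrite eqr_nat => /eqP.
have g0 := @gmom_gt0 q hq.
exists (scale (Num.sqrt (gmom m q))^-1 q); split.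
  by apply: in_config_scale => //; rewrite invr_eq0 gt_eqF // sqrtr_gt0.
rewrite gmom_scale ?invr_ge0 ?sqrtr_ge0 // exprVn sqr_sqrtr ?ltW //.
by rewrite mulVf // gt_eqF.
Qed.

Lemma exists_min : exists c : X, in_config c /\ gmom m c = 1 /\
  forall r, in_config r -> gmom m r = 1 -> cohesion gamma m c <= cohesion gamma m r.
Proof.
have [r0 [cr0 gr0]] := exists_config1.
set f1 := cohesion gamma m r0.
have f1p : 0 < f1 := @cohesion_gt0 r0 cr0.
pose d (i j : 'I_N) := gamma * m i * m j / f1.
have dp i j : 0 < d i j by rewrite /d divr_gt0 // !mulr_gt0.
pose D := \bigcap_(i in [set: 'I_N]) \bigcap_(j in [set j : 'I_N | (i < j)%N])
   ((fun r : X => distp (r i) (r j)) @^-1` [set y | d i j <= y]).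
pose G := (gmom m : X -> R) @^-1` [set y | y = 1].
pose K := G `&` D.
have inK r : in_config r -> gmom m r = 1 -> cohesion gamma m r <= f1 -> K r.
  move=> cr gr fr; split => //= i _ j /= ij.
  have := le_trans (@term_le r i j ij) fr; rewrite /term /d.
  have dd : 0 < distp (r i) (r j) by apply: distp_gt0; apply: cr; rewrite neq_ltn ij.
  by rewrite ler_pdivrMr // ler_pdivrMr // [distp _ _ * f1]mulrC.
have Kpos r : K r -> forall i j : 'I_N, (i < j)%N -> 0 < distp (r i) (r j).
  move=> [_ hD] i j ij; apply: lt_le_trans (dp i j) _; exact: (hD i I j ij).
have Kconf r : K r -> in_config r.
  move=> hK i j; rewrite neq_ltn => /orP[] ij e.
    by have := Kpos r hK i j ij; rewrite e distpp ltxx.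
  by have := Kpos r hK j i ij; rewrite e distpp ltxx.
pose b (i : 'I_N) := (m i)^-1 + 1.
pose Box := [set f : X | forall i, (`[- b i, b i] `*` `[- b i, b i]) (f i)].
have cBox : compact Box.
  apply: (@tychonoff _ (fun _ => (R * R)%type) (fun i => `[- b i, b i] `*` `[- b i, b i])) => i.
  by apply: compact_setX; exact: segment_compact.
have KB : K `<=` Box.
  move=> r [gr _] i; have [h1 h2] := box_bound i gr.
  by split => /=; rewrite in_itv /= -ler_norml.
have cK : closed K.
  apply: closedI.
    apply: preimage_closed; last exact: closed_eq.
    by move=> x _; exact: cgmom.
  apply: closed_bigI => i _; apply: closed_bigI => j _.
  apply: preimage_closed; last exact: closed_ge.
  by move=> x _; exact: cdist.
have compK : compact K by apply: subclosed_compact cK cBox KB.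
have K0 : K !=set0 by exists r0; apply: inK.
have cf : {within K, continuous (cohesion gamma m : X -> R)}.
  apply: continuous_in_subspaceT => x /set_mem xK; apply: ccoh; exact: Kpos.
have [c /set_mem cK' cmin] := compact_EVT_min K0 compK cf.
exists c; split; first exact: Kconf.
split; first by case: cK'.
move=> r cr gr; have [le|lt] := leP (cohesion gamma m r) f1.
  by apply: cmin; apply: mem_set; apply: inK.
apply: le_trans (ltW lt); apply: cmin; apply: mem_set; apply: inK => //.
Qed.
End Alg.

Theorem theorem4p3 (R : realType) (N : nat) (m : 'I_N -> R) (gamma : R) :
  (2 <= N)%N -> (forall i, 0 < m i) -> 0 < gamma ->
  exists C : R,
    (* C = C(m) = min { f(r) : r in frak R, g(r) = 1 } *)
    is_min (fun x => exists r, in_config r /\ gmom m r = 1 /\ cohesion gamma m r = x) C /\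
    (* min { b(r) : r in frak R, f(r) = f0 } = C / (f0 sqrt(sum m)) *)
    (forall f0 : R, 0 < f0 ->
       is_min (fun x => exists r, in_config r /\ cohesion gamma m r = f0 /\ rms_size m r = x)
              (C / (f0 * Num.sqrt (total_mass m)))) /\
    (* attained along every trajectory r_lambda(t) *)
    (forall lam : R, 0 < lam ->
     forall rl : 'I_N -> R * R, is_minimizer gamma m lam rl ->
     forall phi : 'I_N -> R, polar_angles rl phi ->
     forall t : R, 0 <= t ->
       rms_size m (traj rl phi (Num.sqrt (2 * lam)) t) =
       C / (cohesion gamma m (traj rl phi (Num.sqrt (2 * lam)) t) * Num.sqrt (total_mass m))).
Proof.
move=> hN hm hg.
have [c [cc [gc cmin]]] : exists c : 'I_N -> R * R, in_config c /\ gmom m c = 1 /\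
  forall r, in_config r -> gmom m r = 1 -> cohesion gamma m c <= cohesion gamma m r.
  exact: exists_min.
set C := cohesion gamma m c.
have Cp : 0 < C by apply: cohesion_gt0.
have M0 : 0 < total_mass m by apply: total_mass_gt0.
set s := Num.sqrt (total_mass m).
have sp : 0 < s by rewrite sqrtr_gt0.
have rmsF r : rms_size m r = Num.sqrt (gmom m r) / s by apply: rms_formula.
have cohS (k : R) (r : 'I_N -> R * R) : 0 < k -> cohesion gamma m (scale k r) = cohesion gamma m r / k.
  by move=> k0; apply: cohesion_scale.
have gS (k : R) (r : 'I_N -> R * R) : 0 <= k -> gmom m (scale k r) = k ^+ 2 * gmom m r.
  by move=> k0; apply: gmom_scale.
have cS (k : R) (r : 'I_N -> R * R) : 0 < k -> in_config r -> in_config (scale k r).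
  by move=> k0 hr; apply: in_config_scale => //; rewrite gt_eqF.
have low r : in_config r -> C <= cohesion gamma m r * Num.sqrt (gmom m r).
  move=> cr; have g0 : 0 < gmom m r by apply: gmom_gt0.
  set a := Num.sqrt (gmom m r).
  have a0 : 0 < a by rewrite sqrtr_gt0.
  have ai : 0 < a^-1 by rewrite invr_gt0.
  have := cmin (scale a^-1 r) (cS _ _ ai cr).
  rewrite cohS ?invr_gt0 // invrK; apply.
  rewrite gS ?invr_ge0 ?ltW // exprVn sqr_sqrtr ?ltW // mulVf // gt_eqF //.
exists C; split.
  split; first by exists c.
  by move=> y [r [cr [gr <-]]]; apply: cmin.
split.
  move=> f0 f0p; split.
    exists (scale (C / f0) c); split; first by apply: cS => //; rewrite divr_gt0.
    split; first by rewrite cohS ?divr_gt0 // /C; field; rewrite ?gt_eqF.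
    rewrite rmsF gS ?divr_ge0 ?ltW // gc mulr1 sqrtr_sqr ger0_norm ?divr_ge0 ?ltW //.
    by field; rewrite ?gt_eqF.
  move=> y [r [cr [fr <-]]]; rewrite rmsF.
  have := low r cr; rewrite fr => h.
  rewrite invfM mulrA ler_pM2r ?invr_gt0 // ler_pdivrMr // mulrC //.
move=> lam lp rl [crl hmin] phi hp t t0.
have [gt ft] := traj_inv m gamma (Num.sqrt (2 * lam)) t hp.
rewrite rmsF gt ft.
have g0 : 0 < gmom m rl by apply: gmom_gt0.
set a := Num.sqrt (gmom m rl).
have a0 : 0 < a by rewrite sqrtr_gt0.
have e : cohesion gamma m rl = C / a.
  apply/eqP; rewrite eq_le; apply/andP; split.
    have := hmin (scale a c) (cS _ _ a0 cc).
    rewrite cohS // (gS _ _ (ltW a0)) gc mulr1 /a sqr_sqrtr; last exact: ltW.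
    by rewrite lerD2r.
  have := low rl crl; rewrite -/a => h.
  by rewrite ler_pdivrMr.
rewrite e; field; rewrite ?gt_eqF //.
Qed.
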